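(* Let $$P=\begin{bmatrix} x_1 & x_2 & x_3 & x_4 & x_5 & x_6 & x_7 & x_8\\ 3x_1-x_2 & -x_1 & 3x_3-x_4 & -x_3 & 3x_5-x_6 & -x_5 & 3x_7-x_8 & -x_7\\ 3x_3 & 3x_4 & x_1 & x_2 & 3x_7 & 3x_8 & x_5 & x_6\\ 9x_3-3x_4 & -3x_3 & 3x_1-x_2 & -x_1 & 9x_7-3x_8 & -3x_7 & 3x_5-x_6 & -x_5\\ 14x_5 & 14x_6 & 14x_7 & 14x_8 & x_1 & x_2 & x_3 & x_4\\ 42x_5-14x_6 & -14x_5 & 42x_7-14x_8 & -14x_7 & 3x_1-x_2 & -x_1 & 3x_3-x_4 & -x_3\\ 42x_7 & 42x_8 & 14x_5 & 14x_6 & 3x_3 & 3x_4 & x_1 & x_2\\ 126x_7-42x_8 & -42x_7 & 42x_5-14x_6 & -14x_5 & 9x_3-3x_4 & -3x_3 & 3x_1-x_2 & -x_1\end{bmatrix}.$$ Then the octic diophantine equation $\det P=1$ in the unknowns $x_1,\dots,x_8$ has infinitely many solutions in positive integers (one of them being $(2,6,1,3,7,21,4,12)$). *)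

(* Defs.v *)
From mathcomp Require Import all_boot all_order all_algebra.
Set Implicit Arguments. Unset Strict Implicit. Unset Printing Implicit Defensive.
Import Order.TTheory GRing.Theory Num.Theory.
Local Open Scope ring_scope.

Definition P_rows (x1 x2 x3 x4 x5 x6 x7 x8 : int) : seq (seq int) :=
  [:: [:: x1; x2; x3; x4; x5; x6; x7; x8];
      [:: 3*x1-x2; -x1; 3*x3-x4; -x3; 3*x5-x6; -x5; 3*x7-x8; -x7];
      [:: 3*x3; 3*x4; x1; x2; 3*x7; 3*x8; x5; x6];
      [:: 9*x3-3*x4; -(3*x3); 3*x1-x2; -x1; 9*x7-3*x8; -(3*x7); 3*x5-x6; -x5];
      [:: 14*x5; 14*x6; 14*x7; 14*x8; x1; x2; x3; x4];
      [:: 42*x5-14*x6; -(14*x5); 42*x7-14*x8; -(14*x7); 3*x1-x2; -x1; 3*x3-x4; -x3];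
      [:: 42*x7; 42*x8; 14*x5; 14*x6; 3*x3; 3*x4; x1; x2];
      [:: 126*x7-42*x8; -(42*x7); 42*x5-14*x6; -(14*x5); 9*x3-3*x4; -(3*x3); 3*x1-x2; -x1]].

(* x : 8.-tuple int stands for (x_1,...,x_8), with x_{k+1} = tnth x k. *)
Definition Pmx (x : 8.-tuple int) : 'M[int]_8 :=
  let r := P_rows (tnth x (inord 0)) (tnth x (inord 1)) (tnth x (inord 2))
                  (tnth x (inord 3)) (tnth x (inord 4)) (tnth x (inord 5))
                  (tnth x (inord 6)) (tnth x (inord 7)) in
  \matrix_(i < 8, j < 8) nth 0 (nth [::] r i) j.

Definition pos_solution (x : 8.-tuple int) : Prop :=
  (forall k : 'I_8, 0 < tnth x k) /\ \det (Pmx x) = 1.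

(* Main.v *)
Require Import Defs.
From mathcomp Require Import all_boot all_order all_algebra.
From mathcomp Require Import zify ring lra.
Import Order.TTheory GRing.Theory Num.Theory.
Local Open Scope ring_scope.

Fixpoint detF {R : pzRingType} (n : nat) (f : nat -> nat -> R) : R :=
  match n with
  | 0 => 1
  | n'.+1 => foldr (fun j acc => (-1) ^+ j * f 0%N j *
                      detF n' (fun i k => f i.+1 (bump j k)) + acc) 0 (iota 0 n)
  end.

Lemma foldr_sum {R : pzRingType} (F : nat -> R) s :
  foldr (fun j acc => F j + acc) 0 s = \sum_(j <- s) F j.
Proof. by elim: s => [|a s IH] /=; rewrite ?big_nil ?big_cons ?IH. Qed.

Lemma detF_S {R : pzRingType} n (f : nat -> nat -> R) :
  detF n.+1 f = \sum_(j < n.+1) (-1) ^+ j * f 0%N j *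
                      detF n (fun i k => f i.+1 (bump j k)).
Proof.
rewrite -(big_mkord xpredT (fun j => (-1) ^+ j * f 0%N j *
                      detF n (fun i k => f i.+1 (bump j k)))).
by rewrite /index_iota subn0 -foldr_sum.
Qed.

Lemma detF_ext {R : pzRingType} n (f g : nat -> nat -> R) :
  (forall i j, (i < n)%N -> (j < n)%N -> f i j = g i j) -> detF n f = detF n g.
Proof.
elim: n f g => [//|n IH] f g H; rewrite !detF_S.
apply: eq_bigr => j _.
rewrite H //; congr (_ * _); apply: IH => i k Hi Hk; apply: H => //.
rewrite /bump; case: (j <= k)%N => /=; lia.
Qed.

Lemma detF_det {R : comPzRingType} n (A : 'M[R]_n) f :
  (forall i j : 'I_n, A i j = f (i : nat) (j : nat)) -> \det A = detF n f.
Proof.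
elim: n A f => [|n IH] A f H; first by rewrite det_mx00.
rewrite (expand_det_row A ord0) detF_S.
apply: eq_bigr => j _.
rewrite /cofactor (IH _ (fun i k => f i.+1 (bump j k))); last first.
  by move=> i k; rewrite !mxE H.
by rewrite add0n mulrA [A _ _ * _]mulrC H.
Qed.

Lemma detF_morph {R S : pzRingType} (g : {rmorphism R -> S}) n f :
  g (detF n f) = detF n (fun i j => g (f i j)).
Proof.
elim: n f => [|n IH] f; first by rewrite /= rmorph1.
rewrite !detF_S rmorph_sum; apply: eq_bigr => j _.
by rewrite rmorphM rmorphM rmorphXn rmorphN1 IH.
Qed.
Definition mk8 (a b c d e f g h : int) : 8.-tuple int := [tuple of [:: a;b;c;d;e;f;g;h]].
Definition PM (a b c d e f g h : int) : 'M[int]_8 :=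
  \matrix_(i < 8, j < 8) nth 0 (nth [::] (P_rows a b c d e f g h) i) j.
Lemma Pmx_mk8 a b c d e f g h : Pmx (mk8 a b c d e f g h) = PM a b c d e f g h.
Proof. by rewrite /Pmx !(tnth_nth 0) !inordK. Qed.
Definition mulU8 (a b c d e f g h : int) := mk8
 (2*a+6*b+3*c+9*d+98*e+294*f+168*g+504*h)
 (6*a+20*b+9*c+30*d+294*e+980*f+504*g+1680*h)
 (1*a+3*b+2*c+6*d+56*e+168*f+98*g+294*h)
 (3*a+10*b+6*c+20*d+168*e+560*f+294*g+980*h)
 (7*a+21*b+12*c+36*d+2*e+6*f+3*g+9*h)
 (21*a+70*b+36*c+120*d+6*e+20*f+9*g+30*h)
 (4*a+12*b+7*c+21*d+1*e+3*f+2*g+6*h)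
 (12*a+40*b+21*c+70*d+3*e+10*f+6*g+20*h).
Definition Bm := PM 1 0 0 0 0 0 0 0.
Definition Um := PM 2 6 1 3 7 21 4 12.
Lemma key a b c d e f g h : Pmx (mulU8 a b c d e f g h) = Um *m Bm *m PM a b c d e f g h.
Proof.
rewrite /mulU8 Pmx_mk8 /Um /Bm /PM; apply/matrixP => i j.
rewrite !mxE !big_ord_recl big_ord0 !mxE !big_ord_recl !big_ord0 !mxE /=.
case: i => [[|[|[|[|[|[|[|[|//]]]]]]]] Hi]; case: j => [[|[|[|[|[|[|[|[|//]]]]]]]] Hj] /=. all: ring.
Qed.

Definition nthf {R: pzRingType} (L : seq (seq R)) := fun i j => nth 0 (nth [::] L i) j.

Lemma nth_map0 {R S : pzRingType} (g : R -> S) (g0 : g 0 = 0) (s : seq R) j :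
  g (nth 0 s j) = nth 0 (map g s) j.
Proof. by elim: s j => [|x s IH] [|j] //=. Qed.

Lemma nthf_map {R S : pzRingType} (g : R -> S) (g0 : g 0 = 0) L i j :
  g (nthf L i j) = nthf (map (map g) L) i j.
Proof.
rewrite /nthf; elim: L i => [|r L IH] [|i] /=.
- by rewrite !nth_nil g0.
- by rewrite !nth_nil g0.
- by rewrite nth_map0.
- by rewrite IH.
Qed.

Lemma PM_detF a b c d e f g h :
  \det (PM a b c d e f g h) = detF 8 (nthf (P_rows a b c d e f g h)).
Proof. by apply: detF_det => i j; rewrite mxE. Qed.

Lemma detB : \det Bm = 1.
Proof. by rewrite /Bm PM_detF; vm_compute. Qed.

Lemma detU_F3 : ((\det Um)%:~R : 'F_3) = 1.
Proof.
rewrite /Um PM_detF.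
rewrite (detF_morph (intr : {rmorphism int -> 'F_3})).
rewrite (@detF_ext _ 8 _ (nthf (map (map (intr : int -> 'F_3)) (P_rows 2 6 1 3 7 21 4 12)))); last first.
  by move=> i j _ _; rewrite nthf_map.
by apply/eqP; vm_compute.
Qed.

Lemma unit_int (d e : int) : d * e = 1 -> d = 1 \/ d = -1.
Proof. move=> H; have := f_equal absz H; rewrite abszM => /eqP; rewrite muln_eq1 => /andP[/eqP Hd _]; lia. Qed.

Lemma detU : \det Um = 1.
Proof.
have K := key (-3620) 1086 2090 (-627) 970 (-291) (-560) 168.
have E : mulU8 (-3620) 1086 2090 (-627) 970 (-291) (-560) 168 = mk8 1 0 0 0 0 0 0 0.
  by rewrite /mulU8; congr mk8; lia.
rewrite E Pmx_mk8 -/Bm in K.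
have := f_equal determinant K; rewrite !det_mulmx detB mulr1 => H.
case: (@unit_int _ _ (esym H)) => [-> //|Hm].
have F := detU_F3; rewrite Hm in F.
have NE : ((-1)%:~R : 'F_3) != 1 by vm_compute.
by move: NE; rewrite F eqxx.
Qed.

Definition okv (a b c d e f g h : int) :=
  [/\ 0 < a, 0 < b, 0 < c, 0 < d & [/\ 0 < e, 0 < f, 0 < g & 0 < h]] /\
  \det (PM a b c d e f g h) = 1.

Lemma ok_pos a b c d e f g h : okv a b c d e f g h -> pos_solution (mk8 a b c d e f g h).
Proof.
move=> [[Ha Hb Hc Hd [He Hf Hg Hh]] Hdet]; split; last by rewrite Pmx_mk8.
by case => [[|[|[|[|[|[|[|[|//]]]]]]]] Hk].
Qed.

Lemma grow (n : nat) : exists a b c d e f g h,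
  okv a b c d e f g h /\ n%:Z <= a.
Proof.
elim: n => [|n [a [b [c [d [e [f [g [h [[[Ha Hb Hc Hd [He Hf Hg Hh]] Hdet] Hn]]]]]]]]]].
  exists 2, 6, 1, 3, 7, 21, 4, 12; split => //; split => //.
  by have := detU; rewrite /Um.
have K := key a b c d e f g h; rewrite /mulU8 Pmx_mk8 in K.
 exists (2*a+6*b+3*c+9*d+98*e+294*f+168*g+504*h),
 (6*a+20*b+9*c+30*d+294*e+980*f+504*g+1680*h),
 (1*a+3*b+2*c+6*d+56*e+168*f+98*g+294*h),
 (3*a+10*b+6*c+20*d+168*e+560*f+294*g+980*h),
 (7*a+21*b+12*c+36*d+2*e+6*f+3*g+9*h),
 (21*a+70*b+36*c+120*d+6*e+20*f+9*g+30*h),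
 (4*a+12*b+7*c+21*d+1*e+3*f+2*g+6*h),
 (12*a+40*b+21*c+70*d+3*e+10*f+6*g+20*h).
split; first (split; last by rewrite K !det_mulmx detU detB Hdet !mulr1).
- split; [lia|lia|lia|lia|split; lia].
- lia.
Qed.

Lemma lt_b1 (N x : int) : x < `|N| + `|x| + 1. Proof. lia. Qed.
Lemma lt_b2 (N x w : int) : x < N -> x < `|N| + `|w| + 1. Proof. lia. Qed.

Lemma bound (s : seq (8.-tuple int)) : exists N : int, forall y, y \in s -> tnth y ord0 < N.
Proof.
elim: s => [|y s [N HN]]; first by exists 0.
exists (`|N| + `|tnth y ord0| + 1) => z; rewrite in_cons => /orP[/eqP ->|/HN Hz]; [exact: lt_b1|exact: lt_b2].
Qed.

Theorem mainTheorem15 :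
  pos_solution [tuple of [:: 2; 6; 1; 3; 7; 21; 4; 12]] /\
  (forall s : seq (8.-tuple int), exists x : 8.-tuple int,
      pos_solution x /\ x \notin s).
Proof.
split.
  apply: (@ok_pos 2 6 1 3 7 21 4 12).
  by split => //; have := detU; rewrite /Um.
move=> s; have [N HN] := bound s.
have [a [b [c [d [e [f [g [h [Hok Hn]]]]]]]]] := grow `|N|%N.
exists (mk8 a b c d e f g h); split; first exact: ok_pos.
apply/negP => /HN /=; rewrite (tnth_nth 0) /=; lia.
Qed.
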